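(* Let $K$ be a finite set, let $W(x,y)\ge 0$ ($x\neq y\in K$) be transition rates with backward generator $Lf(x)=\sum_{y}W(x,y)[f(y)-f(x)]$, let $\mu$ be any probability distribution on $K$, and let $V,Q:K\to\mathbb{R}$ and $a,b\in\mathbb{R}$. For a twice differentiable function $h:[0,\infty)\to\mathbb{R}$, consider the time-inhomogeneous Markov jump process on $K$ started from $\mu$ at time $0$ with transition rates at time $t$ \[ W_t(x,y)=W(x,y)\,e^{h_t\,(bV(y)-aV(x))}, \] and write $\langle Q(t)\rangle^h_\mu$ for the expectation of $Q(x_t)$ under this process. Then for every $t>0$ and every such $h$, \[ \frac{d}{d\varepsilon}\Big|_{\varepsilon=0}\langle Q(t)\rangle^{\varepsilon h}_\mu=\int_0^t h_s\,R(t,s)\,ds, \] where, for $0<s<t$, \[ R(t,s)= b\,\frac{\partial}{\partial s}\langle V(x_s)Q(x_t)\rangle_\mu - a\,\frac{\partial}{\partial t}\langle V(x_s)Q(x_t)\rangle_\mu + b\Big[\langle V(x_s)\,(LQ)(x_t)\rangle_\mu-\langle (LV)(x_s)\,Q(x_t)\rangle_\mu\Big]. \]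
   Context: $\langle\cdot\rangle_\mu$ denotes expectation for the unperturbed (time-homogeneous) Markov jump process $(x_s)_{s\ge0}$ on $K$ with rates $W$ and initial law $\mu$. Equivalently, $\langle Q(t)\rangle^h_\mu=\langle Q(x_t)\rangle_\mu+\int_0^t h_sR(t,s)\,ds+o(h)$; $R(t,s)$ is called the response function. *)

(* Defs.v *)
From Stdlib Require Import Reals List.
Open Scope R_scope.

(* Sum of f over the enumeration l of the finite state space K. *)
Definition sumK {K : Type} (l : list K) (f : K -> R) : R :=
  fold_right (fun x acc => f x + acc) 0 l.

(* Backward generator  (L f)(x) = sum_y W(x,y) [f(y) - f(x)]
   (the y = x term vanishes, so the diagonal of W is irrelevant). *)
Definition gen {K : Type} (l : list K) (W : K -> K -> R) (f : K -> R) (x : K) : R :=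
  sumK l (fun y => W x y * (f y - f x)).

Definition dirac {K : Type} (eqdec : forall x y : K, {x = y} + {x <> y})
  (x : K) : K -> R := fun y => if eqdec x y then 1 else 0.

(* p : R -> K -> R is the one-time marginal law (p t x = Prob(x_t = x)) of
   the (possibly time-inhomogeneous) Markov jump process on K with
   transition rates Wt t x y at time t, started from the law mu at time 0:
   it is the solution of the forward Kolmogorov (master) equation on
   (0, oo), right-continuous at 0 with initial value mu. *)
Definition kolmogorov_forward {K : Type} (l : list K)
  (Wt : R -> K -> K -> R) (mu : K -> R) (p : R -> K -> R) : Prop :=
  (forall x, p 0 x = mu x) /\
  (forall x eps, 0 < eps -> exists delta, 0 < delta /\
      forall r, 0 <= r < delta -> Rabs (p r x - p 0 x) < eps) /\
  (forall t x, 0 < t ->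
      derivable_pt_lim (fun r => p r x) t
        (sumK l (fun y => p t y * Wt t y x - p t x * Wt t x y))).

Definition perturbed_rates {K : Type} (W : K -> K -> R) (V : K -> R)
  (a b : R) (h : R -> R) : R -> K -> K -> R :=
  fun t x y => W x y * exp (h t * (b * V y - a * V x)).

Definition twice_differentiable_nonneg (h : R -> R) : Prop :=
  exists h1 h2 : R -> R, forall s, 0 <= s ->
    derivable_pt_lim h s (h1 s) /\ derivable_pt_lim h1 s (h2 s).

(* Two-time correlation  < F(x_s) G(x_t) >_mu  (s <= t) of the unperturbed
   process, given its transition function P x r y = Prob_x(x_r = y):
   sum_{z,x,y} mu(z) P_s(z,x) F(x) P_{t-s}(x,y) G(y). *)
Definition corr {K : Type} (l : list K) (P : K -> R -> K -> R) (mu : K -> R)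
  (F G : K -> R) (s t : R) : R :=
  sumK l (fun z => mu z *
    sumK l (fun x => P z s x * F x *
      sumK l (fun y => P x (t - s) y * G y))).

(* Main.v *)
Require Import Defs.
From Stdlib Require Import Reals List Lra Lia Psatz.
Open Scope R_scope.

Lemma Rabs_le_inv x y : Rabs x <= y -> -y <= x <= y.
Proof. intros; split_Rabs; lra. Qed.

Lemma cont_eps f x :
  continuity_pt f x <->
  (forall e, 0 < e -> exists d, 0 < d /\ forall y, Rabs (y - x) < d -> Rabs (f y - f x) < e).
Proof.
  unfold continuity_pt, continue_in, limit1_in, limit_in, D_x, no_cond; simpl; unfold Rdist.
  split.
  - intros H e He. destruct (H e He) as [d [Hd H1]]. exists d; split; auto.
    intros y Hy. destruct (Req_dec y x) as [->|Hne].
    + unfold Rminus; rewrite Rplus_opp_r, Rabs_R0; auto.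
    + apply H1; split; auto.
  - intros H e He. destruct (H e He) as [d [Hd H1]]. exists d; split; auto.
    intros y [_ Hy]; apply H1; auto.
Qed.

Lemma deriv_eq f x l1 l2 : derivable_pt_lim f x l1 -> l1 = l2 -> derivable_pt_lim f x l2.
Proof. intros H ->; exact H. Qed.

Lemma dplus f g x a b : derivable_pt_lim f x a -> derivable_pt_lim g x b ->
  derivable_pt_lim (fun y => f y + g y) x (a + b).
Proof. intros; apply (derivable_pt_lim_plus f g); auto. Qed.
Lemma dminus f g x a b : derivable_pt_lim f x a -> derivable_pt_lim g x b ->
  derivable_pt_lim (fun y => f y - g y) x (a - b).
Proof. intros; apply (derivable_pt_lim_minus f g); auto. Qed.
Lemma dmult f g x a b : derivable_pt_lim f x a -> derivable_pt_lim g x b ->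
  derivable_pt_lim (fun y => f y * g y) x (a * g x + f x * b).
Proof. intros; apply (derivable_pt_lim_mult f g); auto. Qed.
Lemma dconst c x : derivable_pt_lim (fun _ => c) x 0.
Proof. apply (derivable_pt_lim_const c). Qed.
Lemma did x : derivable_pt_lim (fun y => y) x 1.
Proof. apply derivable_pt_lim_id. Qed.
Lemma dcomp f g x a b : derivable_pt_lim g x a -> derivable_pt_lim f (g x) b ->
  derivable_pt_lim (fun y => f (g y)) x (b * a).
Proof. intros; apply (derivable_pt_lim_comp g f); auto. Qed.
Lemma dexp x : derivable_pt_lim exp x (exp x).
Proof. apply derivable_pt_lim_exp. Qed.

Lemma cplus f g x : continuity_pt f x -> continuity_pt g x -> continuity_pt (fun y => f y + g y) x.
Proof. intros; apply (continuity_pt_plus f g); auto. Qed.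
Lemma cminus f g x : continuity_pt f x -> continuity_pt g x -> continuity_pt (fun y => f y - g y) x.
Proof. intros; apply (continuity_pt_minus f g); auto. Qed.
Lemma cmult f g x : continuity_pt f x -> continuity_pt g x -> continuity_pt (fun y => f y * g y) x.
Proof. intros; apply (continuity_pt_mult f g); auto. Qed.
Lemma cconst c x : continuity_pt (fun _ => c) x.
Proof. apply continuity_pt_const; intros ? ?; reflexivity. Qed.
Lemma cid x : continuity_pt (fun y => y) x.
Proof. apply derivable_continuous_pt. exists 1. apply did. Qed.
Lemma ccomp f g x : continuity_pt g x -> continuity_pt f (g x) -> continuity_pt (fun y => f (g y)) x.
Proof. intros; apply (continuity_pt_comp g f); auto. Qed.
Lemma dcont f x a : derivable_pt_lim f x a -> continuity_pt f x.
Proof. intros H; apply derivable_continuous_pt; exists a; exact H. Qed.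

Lemma nonincr (f f' g : R -> R) a b : a < b ->
  (forall x, a < x < b -> derivable_pt_lim f x (f' x)) ->
  (forall x, a < x < b -> f' x <= 0) ->
  continuity_pt g a -> continuity_pt g b ->
  (forall x, a <= x <= b -> f x = g x) -> f b <= f a.
Proof.
  intros Hab Hd Hneg Ca Cb Efg.
  assert (Hrs : forall r s, a < r -> r <= s -> s < b -> f s <= f r).
  { intros r s H1 H2 H3. destruct H2 as [H2|H2]; [|subst; lra].
    destruct (MVT_cor2 f f' r s H2) as [c [Hc1 Hc2]].
    - intros c Hc; apply Hd; lra.
    - assert (f' c <= 0) by (apply Hneg; lra). nra. }
  apply Rnot_lt_le; intro Hlt.
  set (e := f b - f a).
  assert (He : 0 < e / 3) by (unfold e; lra).
  pose proof (proj1 (cont_eps g a) Ca) as Ca'; pose proof (proj1 (cont_eps g b) Cb) as Cb'; clear Ca Cb; rename Ca' into Ca; rename Cb' into Cb.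
  destruct (Ca _ He) as [da [Hda Ha]]. destruct (Cb _ He) as [db [Hdb Hb]].
  set (d := Rmin da (Rmin db ((b - a)/2)) / 2).
  assert (Hm : 0 < Rmin da (Rmin db ((b - a)/2))) by (repeat apply Rmin_pos; lra).
  assert (Hd0 : 0 < d) by (unfold d; lra).
  assert (Hd1 : d < da) by (unfold d; pose proof (Rmin_l da (Rmin db ((b-a)/2))); lra).
  assert (Hd2 : d < db) by (unfold d; pose proof (Rmin_r da (Rmin db ((b-a)/2)));
     pose proof (Rmin_l db ((b-a)/2)); lra).
  assert (Hd3 : d < (b - a)/2) by (unfold d; pose proof (Rmin_r da (Rmin db ((b-a)/2)));
     pose proof (Rmin_r db ((b-a)/2)); lra).
  specialize (Ha (a + d)). specialize (Hb (b - d)).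
  rewrite <- !Efg in Ha, Hb by lra.
  assert (Rabs (f (a + d) - f a) < e/3) by (apply Ha; rewrite Rabs_right; lra).
  assert (Rabs (f (b - d) - f b) < e/3) by (apply Hb; rewrite Rabs_left; lra).
  assert (f (b - d) <= f (a + d)) by (apply Hrs; lra).
  apply Rabs_def2 in H; apply Rabs_def2 in H0. unfold e in *; lra.
Qed.

Lemma mvi (f f' g : R -> R) a b K : a < b ->
  (forall x, a < x < b -> derivable_pt_lim f x (f' x)) ->
  (forall x, a < x < b -> Rabs (f' x) <= K) ->
  continuity_pt g a -> continuity_pt g b ->
  (forall x, a <= x <= b -> f x = g x) -> Rabs (f b - f a) <= K * (b - a).
Proof.
  intros Hab Hd Hb Ca Cb Efg.
  assert (H1 : f b - K * b <= f a - K * a).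
  { apply (nonincr (fun x => f x - K * x) (fun x => f' x - K * 1) (fun x => g x - K * x)); auto.
    - intros x Hx. apply dminus; auto. apply (derivable_pt_lim_scal id). apply did.
    - intros x Hx. specialize (Hb x Hx). apply Rabs_le_inv in Hb. lra.
    - apply cminus; auto. apply (continuity_pt_scal id). apply cid.
    - apply cminus; auto. apply (continuity_pt_scal id). apply cid.
    - intros x Hx; rewrite Efg; auto. }
  assert (H2 : - f b - K * b <= - f a - K * a).
  { apply (nonincr (fun x => - f x - K * x) (fun x => - f' x - K * 1) (fun x => - g x - K * x)); auto.
    - intros x Hx. apply dminus; auto. apply (derivable_pt_lim_opp f). auto.
      apply (derivable_pt_lim_scal id). apply did.
    - intros x Hx. specialize (Hb x Hx). apply Rabs_le_inv in Hb. lra.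
    - apply cminus; auto. apply (continuity_pt_opp g); auto. apply (continuity_pt_scal id). apply cid.
    - apply cminus; auto. apply (continuity_pt_opp g); auto. apply (continuity_pt_scal id). apply cid.
    - intros x Hx; rewrite Efg; auto. }
  apply Rabs_le; lra.
Qed.

Lemma gronwall (E E' g : R -> R) c T : 0 < T ->
  (forall x, 0 < x < T -> derivable_pt_lim E x (E' x)) ->
  (forall x, 0 < x < T -> E' x <= c * E x) ->
  (forall x, 0 <= x <= T -> continuity_pt g x) ->
  (forall x, 0 <= x <= T -> E x = g x) ->
  forall s, 0 <= s <= T -> E s <= E 0 * exp (c * s).
Proof.
  intros HT Hd Hb Cg Eg s Hs.
  destruct (Req_dec s 0) as [->|Hs0].
  { rewrite Rmult_0_r, exp_0; lra. }
  assert (Hdx : forall x, derivable_pt_lim (fun y => exp (- (c * y))) x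
                  (exp (- (c * x)) * (- (c * 1)))).
  { intro x. apply (dcomp exp (fun y => - (c * y))). apply (derivable_pt_lim_opp (fun y => c * y)).
    apply (derivable_pt_lim_scal id). apply did. apply dexp. }
  assert (Hcx : forall x, continuity_pt (fun y => exp (- (c * y))) x).
  { intro x; eapply dcont; apply Hdx. }
  assert (H : E s * exp (- (c * s)) <= E 0 * exp (- (c * 0))).
  { apply (nonincr (fun x => E x * exp (- (c * x)))
      (fun x => E' x * exp (- (c * x)) + E x * (exp (- (c * x)) * (- (c * 1))))
      (fun x => g x * exp (- (c * x)))); try lra.
    - intros x Hx. apply (dmult E (fun y => exp (- (c * y)))); [apply Hd; lra | apply Hdx].
    - intros x Hx. pose proof (Hb x ltac:(lra)). pose proof (exp_pos (- (c * x))). nra.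
    - apply cmult; [apply Cg; lra | apply Hcx].
    - apply cmult; [apply Cg; lra | apply Hcx].
    - intros x Hx. rewrite Eg; auto. lra. }
  rewrite Rmult_0_r, Ropp_0, exp_0, Rmult_1_r in H.
  assert (Hm : exp (- (c * s)) * exp (c * s) = 1) by (rewrite <- exp_plus; replace (- (c*s) + c*s) with 0 by ring; apply exp_0).
  pose proof (exp_pos (c * s)).
  apply Rmult_le_compat_r with (r := exp (c * s)) in H; [|lra].
  rewrite Rmult_assoc, Hm, Rmult_1_r in H. exact H.
Qed.

Lemma exp_le1 z : Rabs z <= 1 -> Rabs (exp z - 1) <= 3 * Rabs z.
Proof.
  intros Hz. replace 1 with (exp 0) at 1 by apply exp_0.
  destruct (MVT_abs exp exp 0 z) as [c [Hc Hc2]].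
  { intros; apply dexp. }
  rewrite Hc. rewrite Rminus_0_r. apply Rmult_le_compat_r; [apply Rabs_pos|].
  rewrite Rabs_right by (left; apply exp_pos).
  apply Rle_trans with (exp 1); [|apply exp_le_3].
  assert (c <= 1).
  { apply Rabs_le_inv in Hz. unfold Rmin, Rmax in Hc2; destruct Rle_dec; lra. }
  destruct H; [left; apply exp_increasing; auto| subst; lra].
Qed.

Lemma exp_le2 z : Rabs z <= 1 -> Rabs (exp z - 1 - z) <= 3 * (z * z).
Proof.
  intros Hz.
  destruct (MVT_abs (fun y => exp y - 1 - y) (fun y => exp y - 1) 0 z) as [c [Hc Hc2]].
  { intros c _. apply deriv_eq with (exp c - 0 - 1).
    apply dminus. apply dminus. apply dexp. apply dconst. apply did. ring. }
  replace (exp z - 1 - z) with ((exp z - 1 - z) - (exp 0 - 1 - 0)) by (rewrite exp_0; ring).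
  rewrite Hc, Rminus_0_r.
  assert (Hcz : Rabs c <= Rabs z).
  { unfold Rmin, Rmax in Hc2; destruct Rle_dec; split_Rabs; lra. }
  pose proof (exp_le1 c ltac:(lra)).
  replace (z * z) with (Rabs z * Rabs z) by (split_Rabs; ring).
  pose proof (Rabs_pos (exp c - 1)). pose proof (Rabs_pos z). nra.
Qed.

Definition rcont0 (f : R -> R) : Prop :=
  forall e, 0 < e -> exists d, 0 < d /\ forall r, 0 <= r < d -> Rabs (f r - f 0) < e.

Lemma clamp_cont (f : R -> R) : rcont0 f -> (forall r, 0 < r -> continuity_pt f r) ->
  forall r, continuity_pt (fun r => f (Rmax 0 r)) r.
Proof.
  intros Hr Hc r.
  destruct (Rtotal_order r 0) as [Hn|[->|Hp]].
  - apply continuity_pt_locally_ext with (f := fun _ => f 0) (a := - r).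
    + lra.
    + intros y Hy. unfold Rdist in Hy. rewrite Rmax_left; auto. split_Rabs; lra.
    + apply cconst.
  - apply cont_eps. intros e He. destruct (Hr e He) as [d [Hd H]].
    exists d; split; auto. intros y Hy. rewrite (Rmax_left 0 0) by lra.
    destruct (Rle_dec 0 y).
    + rewrite Rmax_right by auto. apply H. split_Rabs; lra.
    + rewrite Rmax_left by lra. unfold Rminus; rewrite Rplus_opp_r, Rabs_R0; auto.
  - apply continuity_pt_locally_ext with (f := f) (a := r); auto.
    intros y Hy. unfold Rdist in Hy. rewrite Rmax_right; auto. split_Rabs; lra.
Qed.

Lemma exp_mono x y : x <= y -> exp x <= exp y.
Proof. intros [H|H]; [left; apply exp_increasing; auto | rewrite H; lra]. Qed.


Lemma sumK_nil {K} (f : K -> R) : sumK nil f = 0.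
Proof. reflexivity. Qed.
Lemma sumK_cons {K} (a : K) l f : sumK (a :: l) f = f a + sumK l f.
Proof. reflexivity. Qed.

Lemma sumK_ext {K} (l : list K) f g : (forall x, f x = g x) -> sumK l f = sumK l g.
Proof. intros H; induction l; simpl; auto. rewrite H, IHl; auto. Qed.
Lemma sumK_ext_in {K} (l : list K) f g : (forall x, In x l -> f x = g x) -> sumK l f = sumK l g.
Proof. intros H; induction l; simpl; auto. rewrite H, IHl; auto. intros; apply H; simpl; auto. simpl; auto. Qed.
Lemma sumK_plus {K} (l : list K) f g : sumK l (fun x => f x + g x) = sumK l f + sumK l g.
Proof. induction l; simpl; [ring|]. rewrite IHl; ring. Qed.
Lemma sumK_minus {K} (l : list K) f g : sumK l (fun x => f x - g x) = sumK l f - sumK l g.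
Proof. induction l; simpl; [ring|]. rewrite IHl; ring. Qed.
Lemma sumK_opp {K} (l : list K) f : sumK l (fun x => - f x) = - sumK l f.
Proof. induction l; simpl; [ring|]. rewrite IHl; ring. Qed.
Lemma sumK_mult_l {K} (l : list K) c f : c * sumK l f = sumK l (fun x => c * f x).
Proof. induction l; simpl; [ring|]. rewrite <- IHl; ring. Qed.
Lemma sumK_mult_r {K} (l : list K) c f : sumK l f * c = sumK l (fun x => f x * c).
Proof. induction l; simpl; [ring|]. rewrite <- IHl; ring. Qed.
Lemma sumK_zero {K} (l : list K) : sumK l (fun _ => 0) = 0.
Proof. induction l; simpl; auto. rewrite IHl; ring. Qed.
Lemma sumK_const {K} (l : list K) c : sumK l (fun _ => c) = INR (length l) * c.
Proof. induction l; simpl length; [simpl; ring|]. rewrite sumK_cons, IHl, S_INR; ring. Qed.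
Lemma sumK_swap {K} (l1 l2 : list K) (F : K -> K -> R) :
  sumK l1 (fun x => sumK l2 (fun y => F x y)) = sumK l2 (fun y => sumK l1 (fun x => F x y)).
Proof.
  induction l1; simpl.
  - symmetry; apply sumK_zero.
  - rewrite IHl1. rewrite <- sumK_plus. reflexivity.
Qed.
Lemma sumK_le {K} (l : list K) f g : (forall x, f x <= g x) -> sumK l f <= sumK l g.
Proof. intros H; induction l; simpl; [lra|]. specialize (H a); lra. Qed.
Lemma sumK_nonneg {K} (l : list K) f : (forall x, 0 <= f x) -> 0 <= sumK l f.
Proof. intros H; induction l; simpl; [lra|]. specialize (H a); lra. Qed.
Lemma sumK_abs {K} (l : list K) f : Rabs (sumK l f) <= sumK l (fun x => Rabs (f x)).
Proof. induction l; simpl. rewrite Rabs_R0; lra.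
  eapply Rle_trans; [apply Rabs_triang|]. lra. Qed.
Lemma sumK_bound {K} (l : list K) f M : (forall x, Rabs (f x) <= M) ->
  Rabs (sumK l f) <= INR (length l) * M.
Proof. intros H. eapply Rle_trans; [apply sumK_abs|]. rewrite <- sumK_const. apply sumK_le; auto. Qed.
Lemma sumK_term {K} (l : list K) f x : (forall y, 0 <= f y) -> In x l -> f x <= sumK l f.
Proof.
  intros H Hx; induction l; simpl in *; [tauto|].
  destruct Hx as [->|Hx].
  - pose proof (sumK_nonneg l f H); lra.
  - pose proof (H a); specialize (IHl Hx); lra.
Qed.

Lemma sumK_notin {K} (eqdec : forall x y : K, {x = y} + {x <> y}) (l : list K) x f :
  ~ In x l -> sumK l (fun y => (if eqdec x y then 1 else 0) * f y) = 0.
Proof.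
  intros H; induction l; simpl; auto. destruct (eqdec x a).
  - subst; simpl in H; tauto.
  - rewrite IHl. ring. simpl in H; tauto.
Qed.
Lemma sumK_dirac {K} (eqdec : forall x y : K, {x = y} + {x <> y}) (l : list K) x f :
  NoDup l -> In x l -> sumK l (fun y => (if eqdec x y then 1 else 0) * f y) = f x.
Proof.
  intros Hn Hx; induction Hn; simpl in *; [tauto|].
  destruct (eqdec x x0).
  - subst. rewrite sumK_notin; auto. ring.
  - destruct Hx as [->|Hx]; [tauto|]. rewrite IHHn; auto. ring.
Qed.
Lemma sumK_dirac' {K} (eqdec : forall x y : K, {x = y} + {x <> y}) (l : list K) x f :
  NoDup l -> In x l -> sumK l (fun y => f y * (if eqdec y x then 1 else 0)) = f x.
Proof.
  intros Hn Hx. rewrite <- (sumK_dirac eqdec l x f Hn Hx). apply sumK_ext. intros y.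
  destruct (eqdec y x), (eqdec x y); subst; try ring; congruence.
Qed.

Lemma deriv_sumK {K} (l : list K) (F : K -> R -> R) F' s :
  (forall x, derivable_pt_lim (F x) s (F' x)) ->
  derivable_pt_lim (fun r => sumK l (fun x => F x r)) s (sumK l F').
Proof.
  intros H; induction l; simpl.
  - apply dconst.
  - apply (dplus (F a) (fun r => sumK l (fun x => F x r))); auto.
Qed.
Lemma cont_sumK {K} (l : list K) (F : K -> R -> R) s :
  (forall x, continuity_pt (F x) s) ->
  continuity_pt (fun r => sumK l (fun x => F x r)) s.
Proof.
  intros H; induction l; simpl.
  - apply cconst.
  - apply (cplus (F a) (fun r => sumK l (fun x => F x r))); auto.
Qed.

Lemma fin_bound {K} (l : list K) (Pr : K -> R -> Prop) :
  (forall x M M', M <= M' -> Pr x M -> Pr x M') ->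
  (forall x, In x l -> exists M, Pr x M) -> exists M, 0 <= M /\ forall x, In x l -> Pr x M.
Proof.
  intros Hm H; induction l.
  - exists 0; split; [lra|]; simpl; tauto.
  - destruct IHl as [M [HM0 HM]]. intros; apply H; simpl; auto.
    destruct (H a) as [Ma HMa]; simpl; auto.
    exists (Rmax M (Rmax Ma 0)). split. eapply Rle_trans; [|apply Rmax_l]; auto.
    intros x [->|Hx].
    + apply Hm with Ma; auto. eapply Rle_trans; [|apply Rmax_r]; apply Rmax_l.
    + apply Hm with M; auto. apply Rmax_l.
Qed.

Definition fwd {K : Type} (l : list K) (w : K -> K -> R) (p : K -> R) (y : K) : R :=
  sumK l (fun v => p v * w v y - p y * w y v).

Lemma duality {K} (l : list K) w p f :
  sumK l (fun y => fwd l w p y * f y) = sumK l (fun x => p x * gen l w f x).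
Proof.
  unfold fwd, gen.
  transitivity (sumK l (fun y => sumK l (fun v => p v * w v y * f y)) -
                sumK l (fun y => sumK l (fun v => p y * w y v * f y))).
  { rewrite <- sumK_minus. apply sumK_ext; intro y. rewrite sumK_mult_r, <- sumK_minus.
    apply sumK_ext; intro v; ring. }
  transitivity (sumK l (fun x => sumK l (fun y => p x * w x y * f y)) -
                sumK l (fun x => sumK l (fun y => p x * w x y * f x))).
  { rewrite sumK_swap. reflexivity. }
  rewrite <- sumK_minus. apply sumK_ext; intro x. rewrite sumK_mult_l, <- sumK_minus.
  apply sumK_ext; intro y; ring.
Qed.

Lemma key_ineq {K} (l : list K) w p C : 0 <= C -> (forall x y, Rabs (w x y) <= C) ->
  sumK l (fun x => p x * fwd l w p x) <= 2 * C * INR (length l) * sumK l (fun x => p x * p x).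
Proof.
  intros HC Hw. unfold fwd.
  apply Rle_trans with (sumK l (fun x => sumK l (fun y => 3 * C / 2 * (p x * p x) + C / 2 * (p y * p y)))).
  { apply sumK_le; intro x. rewrite sumK_mult_l. apply sumK_le; intro y.
    pose proof (Rabs_le_inv _ _ (Hw y x)). pose proof (Rabs_le_inv _ _ (Hw x y)).
    assert (0 <= (C - w y x) * ((p x + p y) * (p x + p y))) by (apply Rmult_le_pos; [lra | apply Rle_0_sqr]).
    assert (0 <= (C + w y x) * ((p x - p y) * (p x - p y))) by (apply Rmult_le_pos; [lra | apply Rle_0_sqr]).
    assert (0 <= (C + w x y) * (p x * p x)) by (apply Rmult_le_pos; [lra | apply Rle_0_sqr]).
    nra. }
  right. rewrite (sumK_ext l _ (fun x => sumK l (fun _ => 3 * C / 2 * (p x * p x)) + sumK l (fun y => C / 2 * (p y * p y))))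
    by (intro x; apply sumK_plus).
  rewrite sumK_plus. rewrite (sumK_ext l (fun x => sumK l (fun _ => 3 * C / 2 * (p x * p x))) (fun x => INR (length l) * (3 * C / 2 * (p x * p x)))) by (intro; apply sumK_const).
  rewrite sumK_const.
  rewrite <- (sumK_mult_l l (INR (length l)) (fun x => 3 * C / 2 * (p x * p x))).
  rewrite <- (sumK_mult_l l (3 * C / 2) (fun x => p x * p x)).
  rewrite <- (sumK_mult_l l (C / 2) (fun x => p x * p x)). field.
Qed.

Lemma vec_gronwall {K} (l : list K) (d : R -> K -> R) (w : R -> K -> K -> R) C T (gd : K -> R -> R) :
  0 < T -> 0 <= C -> (forall s x y, 0 < s < T -> Rabs (w s x y) <= C) ->
  (forall s x, 0 < s < T -> derivable_pt_lim (fun r => d r x) s (fwd l (w s) (d s) x)) ->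
  (forall x s, 0 <= s <= T -> continuity_pt (gd x) s) ->
  (forall x s, 0 <= s <= T -> d s x = gd x s) ->
  forall s, 0 <= s <= T -> sumK l (fun x => d s x * d s x) <=
     sumK l (fun x => d 0 x * d 0 x) * exp (4 * C * INR (length l) * s).
Proof.
  intros HT HC Hw Hd Hc Heq.
  apply (gronwall (fun r => sumK l (fun x => d r x * d r x))
    (fun r => sumK l (fun x => fwd l (w r) (d r) x * d r x + d r x * fwd l (w r) (d r) x))
    (fun r => sumK l (fun x => gd x r * gd x r))); auto.
  - intros s Hs. apply (deriv_sumK l (fun x r => d r x * d r x)). intro x.
    apply (dmult (fun r => d r x) (fun r => d r x)); apply Hd; auto.
  - intros s Hs. rewrite (sumK_ext l _ (fun x => 2 * (d s x * fwd l (w s) (d s) x))) by (intro; ring).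
    rewrite <- sumK_mult_l. pose proof (key_ineq l (w s) (d s) C HC (fun x y => Hw s x y Hs)). lra.
  - intros s Hs. apply (cont_sumK l (fun x r => gd x r * gd x r)). intro x.
    apply (cmult (gd x) (gd x)); auto.
  - intros s Hs. apply sumK_ext; intro x. rewrite Heq; auto.
Qed.

Lemma comp_bound {K} (l : list K) (p : K -> R) x : In x l ->
  Rabs (p x) <= 1 + sumK l (fun y => p y * p y).
Proof.
  intros Hx. pose proof (sumK_term l (fun y => p y * p y) x (fun y => Rle_0_sqr (p y)) Hx).
  simpl in H. split_Rabs; nra.
Qed.

Lemma fwd_minus {K} (l : list K) w p q y :
  fwd l w (fun v => p v - q v) y = fwd l w p y - fwd l w q y.
Proof. unfold fwd. rewrite <- sumK_minus. apply sumK_ext; intro; ring. Qed.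

Lemma fwd_lin {K} (l : list K) w (c : K -> R) (P : K -> K -> R) y :
  fwd l w (fun v => sumK l (fun z => c z * P z v)) y = sumK l (fun z => c z * fwd l w (P z) y).
Proof.
  unfold fwd.
  transitivity (sumK l (fun v => sumK l (fun z => c z * P z v * w v y - c z * P z y * w y v))).
  { apply sumK_ext; intro v. rewrite !sumK_mult_r, <- sumK_minus. apply sumK_ext; intro; ring. }
  rewrite sumK_swap. apply sumK_ext; intro z. rewrite sumK_mult_l. apply sumK_ext; intro; ring.
Qed.

Lemma gen_lin {K} (l : list K) W x (P : K -> K -> R) f :
  sumK l (fun y => gen l W (fun w => P w y) x * f y) =
  gen l W (fun z => sumK l (fun y => P z y * f y)) x.
Proof.
  unfold gen.
  transitivity (sumK l (fun y => sumK l (fun w => W x w * (P w y * f y - P x y * f y)))).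
  { apply sumK_ext; intro y. rewrite sumK_mult_r. apply sumK_ext; intro; ring. }
  rewrite sumK_swap. apply sumK_ext; intro w. rewrite <- sumK_minus, sumK_mult_l. apply sumK_ext; intro; ring.
Qed.

Lemma comm_alg {K} (l : list K) W (P : K -> K -> R) x y :
  fwd l W (fun v => fwd l W (P x) v - gen l W (fun w => P w v) x) y
  = fwd l W (fwd l W (P x)) y - gen l W (fun w => fwd l W (P w) y) x.
Proof.
  rewrite fwd_minus. f_equal.
  unfold fwd, gen.
  transitivity (sumK l (fun v => sumK l (fun w =>
     W x w * ((P w v - P x v) * W v y - (P w y - P x y) * W y v)))).
  { apply sumK_ext; intro v. rewrite !sumK_mult_r, <- sumK_minus. apply sumK_ext; intro; ring. }
  rewrite sumK_swap. apply sumK_ext; intro w. rewrite <- sumK_minus, sumK_mult_l.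
  apply sumK_ext; intro; ring.
Qed.

Lemma sol_bound {K} (l : list K) (p : R -> K -> R) (w : R -> K -> K -> R) C T :
  0 < T -> 0 <= C -> (forall s x y, 0 < s < T -> Rabs (w s x y) <= C) ->
  (forall s x, 0 < s -> derivable_pt_lim (fun r => p r x) s (fwd l (w s) (p s) x)) ->
  (forall x r, continuity_pt (fun r => p (Rmax 0 r) x) r) ->
  forall s, 0 <= s <= T -> sumK l (fun x => p s x * p s x) <=
     sumK l (fun x => p 0 x * p 0 x) * exp (4 * C * INR (length l) * T).
Proof.
  intros HT HC Hw Hd Hc s Hs.
  eapply Rle_trans.
  - apply (vec_gronwall l p w C T (fun x r => p (Rmax 0 r) x)); auto.
    + intros; apply Hd; lra.
    + intros x r Hr. rewrite Rmax_right; auto; lra.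
  - apply Rmult_le_compat_l. apply sumK_nonneg; intro; apply Rle_0_sqr.
    apply exp_mono. pose proof (pos_INR (length l)).
    apply Rmult_le_compat_l; [|lra]. pose proof (Rmult_le_pos C (INR (length l)) HC H). lra.
Qed.

Lemma uniq {K} (l : list K) (Hfull : forall x : K, In x l) (W : K -> K -> R) (d : R -> K -> R) :
  (forall s y, 0 < s -> derivable_pt_lim (fun r => d r y) s (fwd l W (d s) y)) ->
  (forall y r, continuity_pt (fun r => d (Rmax 0 r) y) r) ->
  (forall y, d 0 y = 0) -> forall s y, 0 <= s -> d s y = 0.
Proof.
  intros Hd Hc H0 s y Hs.
  set (C := sumK l (fun x => sumK l (fun y => Rabs (W x y)))).
  assert (HC : forall x y, Rabs (W x y) <= C).
  { intros x y'. unfold C.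
    eapply Rle_trans; [|apply (sumK_term l (fun x => sumK l (fun y => Rabs (W x y))) x)]; auto.
    - apply (sumK_term l (fun y => Rabs (W x y))); auto. intro; apply Rabs_pos.
    - intro; apply sumK_nonneg; intro; apply Rabs_pos. }
  assert (HC0 : 0 <= C) by (eapply Rle_trans; [apply Rabs_pos|apply (HC y y)]).
  destruct (Req_dec s 0) as [->|Hs0]; auto.
  pose proof (sol_bound l d (fun _ => W) C s ltac:(lra) HC0 (fun _ x y _ => HC x y) Hd Hc s ltac:(lra)).
  rewrite (sumK_ext l (fun x => d 0 x * d 0 x) (fun _ => 0)) in H by (intro; rewrite H0; ring).
  rewrite sumK_zero, Rmult_0_l in H.
  pose proof (sumK_term l (fun x => d s x * d s x) y (fun y => Rle_0_sqr _) (Hfull y)).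
  simpl in H1. nra.
Qed.

Lemma mat_bound {K} (l : list K) (Hfull : forall x : K, In x l) (M : K -> K -> R) :
  exists C, 0 <= C /\ forall x y, Rabs (M x y) <= C.
Proof.
  exists (sumK l (fun x => sumK l (fun y => Rabs (M x y)))). split.
  - apply sumK_nonneg; intro; apply sumK_nonneg; intro; apply Rabs_pos.
  - intros x y.
    eapply Rle_trans; [|apply (sumK_term l (fun x => sumK l (fun y => Rabs (M x y))) x)]; auto.
    + apply (sumK_term l (fun y => Rabs (M x y))); auto. intro; apply Rabs_pos.
    + intro; apply sumK_nonneg; intro; apply Rabs_pos.
Qed.

Lemma sol_comp_bound {K} (l : list K) (Hfull : forall x : K, In x l) (p : R -> K -> R) (w : R -> K -> K -> R) C T :
  0 < T -> 0 <= C -> (forall s x y, 0 < s < T -> Rabs (w s x y) <= C) ->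
  (forall s x, 0 < s -> derivable_pt_lim (fun r => p r x) s (fwd l (w s) (p s) x)) ->
  (forall x r, continuity_pt (fun r => p (Rmax 0 r) x) r) ->
  forall s x, 0 <= s <= T -> Rabs (p s x) <=
     1 + sumK l (fun x => p 0 x * p 0 x) * exp (4 * C * INR (length l) * T).
Proof.
  intros. eapply Rle_trans. apply (comp_bound l (p s) x (Hfull x)).
  pose proof (sol_bound l p w C T H H0 H1 H2 H3 s H4). lra.
Qed.

Lemma sum2_bound {K} (l : list K) (A : K -> R) (B : K -> K -> R) MA MB :
  0 <= MA -> (forall x, Rabs (A x) <= MA) -> (forall x y, Rabs (B x y) <= MB) ->
  Rabs (sumK l (fun x => A x * sumK l (fun y => B x y))) <= INR (length l) * (MA * (INR (length l) * MB)).
Proof.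
  intros HMA HA HB. apply sumK_bound. intro x. rewrite Rabs_mult.
  apply Rmult_le_compat; auto using Rabs_pos. apply sumK_bound; auto.
Qed.

Lemma abs3 a b c A B C : Rabs a <= A -> Rabs b <= B -> Rabs c <= C -> Rabs (a * b * c) <= A * B * C.
Proof.
  intros. rewrite !Rabs_mult. pose proof (Rabs_pos a). pose proof (Rabs_pos b). pose proof (Rabs_pos c).
  apply Rmult_le_compat; try apply Rmult_le_compat; auto using Rmult_le_pos, Rabs_pos.
Qed.

Lemma kf_sol {K} (l : list K) Wt mu p : kolmogorov_forward l Wt mu p ->
  (forall x r, continuity_pt (fun r => p (Rmax 0 r) x) r) /\
  (forall s x, 0 < s -> derivable_pt_lim (fun r => p r x) s (fwd l (Wt s) (p s) x)) /\
  (forall x, p 0 x = mu x).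
Proof.
  intros [H0 [Hc Hd]]. split; [|split; auto].
  intros x. apply (clamp_cont (fun r => p r x)).
  - exact (Hc x).
  - intros r Hr. eapply dcont. apply (Hd r x Hr).
Qed.

Ltac cont_tac :=
  repeat first [ apply cont_sumK; intros ? | apply cminus | apply cplus | apply cmult | apply cconst ].

Ltac dtac := repeat first [ apply deriv_sumK; intros ? | apply dminus | apply dplus | apply dmult | apply dconst ].

Lemma dirac_init {K} (eqdec : forall x y : K, {x = y} + {x <> y}) (l : list K)
  (Hnodup : NoDup l) (Hfull : forall x : K, In x l) W x y :
  fwd l W (dirac eqdec x) y - gen l W (fun w => dirac eqdec w y) x = 0.
Proof.
  unfold fwd, gen, dirac.
  rewrite sumK_minus.
  rewrite (sumK_ext l (fun w => W x w * ((if eqdec w y then 1 else 0) - (if eqdec x y then 1 else 0)))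
      (fun w => W x w * (if eqdec w y then 1 else 0) - (if eqdec x y then 1 else 0) * W x w)) by (intro; ring).
  rewrite sumK_minus.
  rewrite sumK_dirac by auto.
  rewrite (sumK_dirac' eqdec l y (fun w => W x w)) by auto.
  rewrite <- !sumK_mult_l.
  destruct (eqdec x y); [subst; ring | ring].
Qed.

Lemma comm {K} (eqdec : forall x y : K, {x = y} + {x <> y}) (l : list K)
  (Hnodup : NoDup l) (Hfull : forall x : K, In x l) W (P : K -> R -> K -> R)
  (HP : forall x : K, kolmogorov_forward l (fun _ => W) (dirac eqdec x) (P x)) :
  forall x y r, 0 <= r -> fwd l W (P x r) y = gen l W (fun w => P w r y) x.
Proof.
  assert (HPc : forall x y r, continuity_pt (fun r => P x (Rmax 0 r) y) r) by (intros x; apply (kf_sol _ _ _ _ (HP x))).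
  assert (HPd : forall x s y, 0 < s -> derivable_pt_lim (fun r => P x r y) s (fwd l W (P x s) y))
    by (intros x; apply (kf_sol _ _ _ _ (HP x))).
  assert (HP0 : forall x y, P x 0 y = dirac eqdec x y) by (intros x; apply (kf_sol _ _ _ _ (HP x))).
  intros x y r Hr.
  apply Rminus_diag_uniq.
  apply (uniq l Hfull W (fun r y => fwd l W (P x r) y - gen l W (fun w => P w r y) x)); auto.
  - intros s y' Hs. eapply deriv_eq.
    + unfold fwd, gen. dtac; apply HPd; auto.
    + cbv beta. refine (eq_trans _ (eq_sym (comm_alg l W (fun w v => P w s v) x y'))). cbv beta. unfold fwd, gen. f_equal; apply sumK_ext; intro v; try ring.
  - intros y' r'. unfold fwd, gen. cont_tac; apply HPc.
  - intros y'.
    replace (fwd l W (P x 0) y') with (fwd l W (dirac eqdec x) y') by (unfold fwd; apply sumK_ext; intro; rewrite !HP0; reflexivity).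
    replace (gen l W (fun w => P w 0 y') x) with (gen l W (fun w => dirac eqdec w y') x) by (unfold gen; apply sumK_ext; intro; rewrite !HP0; reflexivity).
    apply dirac_init; auto.
Qed.

Lemma bwd_eq {K} (eqdec : forall x y : K, {x = y} + {x <> y}) (l : list K)
  (Hnodup : NoDup l) (Hfull : forall x : K, In x l) W (P : K -> R -> K -> R)
  (HP : forall x : K, kolmogorov_forward l (fun _ => W) (dirac eqdec x) (P x)) :
  forall x r (f : K -> R), 0 < r -> derivable_pt_lim (fun r => sumK l (fun y => P x r y * f y)) r
     (gen l W (fun z => sumK l (fun y => P z r y * f y)) x).
Proof.
  assert (HPd : forall x s y, 0 < s -> derivable_pt_lim (fun r => P x r y) s (fwd l W (P x s) y))
    by (intros x; apply (kf_sol _ _ _ _ (HP x))).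
  intros x r f Hr. eapply deriv_eq.
  - dtac. apply HPd; auto.
  - rewrite <- (gen_lin l W x (fun w y => P w r y) f). apply sumK_ext; intro y.
    rewrite <- (comm eqdec l Hnodup Hfull W P HP) by lra. ring.
Qed.

Lemma p0_rep {K} (eqdec : forall x y : K, {x = y} + {x <> y}) (l : list K)
  (Hnodup : NoDup l) (Hfull : forall x : K, In x l) W (P : K -> R -> K -> R)
  (HP : forall x : K, kolmogorov_forward l (fun _ => W) (dirac eqdec x) (P x))
  mu (p : R -> K -> R) (Hp : kolmogorov_forward l (fun _ => W) mu p) :
  forall s x, 0 <= s -> p s x = sumK l (fun z => mu z * P z s x).
Proof.
  assert (HPc : forall x y r, continuity_pt (fun r => P x (Rmax 0 r) y) r) by (intros x; apply (kf_sol _ _ _ _ (HP x))).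
  assert (HPd : forall x s y, 0 < s -> derivable_pt_lim (fun r => P x r y) s (fwd l W (P x s) y))
    by (intros x; apply (kf_sol _ _ _ _ (HP x))).
  assert (HP0 : forall x y, P x 0 y = dirac eqdec x y) by (intros x; apply (kf_sol _ _ _ _ (HP x))).
  destruct (kf_sol _ _ _ _ Hp) as [Hpc [Hpd Hp0]].
  intros s x Hs. apply Rminus_diag_uniq.
  apply (uniq l Hfull W (fun r y => p r y - sumK l (fun z => mu z * P z r y))); auto.
  - intros s' y Hs'. eapply deriv_eq.
    + apply dminus. apply Hpd; auto. dtac. apply HPd; auto.
    + cbv beta. rewrite fwd_minus, (fwd_lin l W mu (fun z v => P z s' v)). f_equal.
      apply sumK_ext; intro; rewrite Rmult_0_l, Rplus_0_l; reflexivity.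
  - intros y r. cont_tac. apply Hpc. apply HPc.
  - intros y. rewrite Hp0. unfold dirac.
    rewrite (sumK_ext l (fun z => mu z * P z 0 y) (fun z => mu z * (if eqdec z y then 1 else 0))) by (intro; rewrite HP0; reflexivity).
    rewrite sumK_dirac' by auto. ring.
Qed.

Lemma reassoc {K} (l : list K) (mu : K -> R) (M : K -> K -> R) (A : K -> R) :
  sumK l (fun z => mu z * sumK l (fun x => M z x * A x)) =
  sumK l (fun x => sumK l (fun z => mu z * M z x) * A x).
Proof.
  transitivity (sumK l (fun z => sumK l (fun x => mu z * M z x * A x))).
  { apply sumK_ext; intro z. rewrite sumK_mult_l. apply sumK_ext; intro; ring. }
  rewrite sumK_swap. apply sumK_ext; intro x. rewrite sumK_mult_r. reflexivity.
Qed.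

Lemma alg_identity {K} (l : list K) W mu (P : K -> R -> K -> R) V Q s t hs a b
  (Hcomm : forall x y, fwd l W (P x (t - s)) y = gen l W (fun w => P w (t - s) y) x) :
  hs * (b * sumK l (fun z => mu z * sumK l (fun x => fwd l W (P z s) x * V x * sumK l (fun y => P x (t - s) y * Q y)
                       - P z s x * V x * sumK l (fun y => fwd l W (P x (t - s)) y * Q y)))
        - a * sumK l (fun z => mu z * sumK l (fun x => P z s x * V x * sumK l (fun y => fwd l W (P x (t - s)) y * Q y)))
        + b * (corr l P mu V (gen l W Q) s t - corr l P mu (gen l W V) Q s t))
  = sumK l (fun x => sumK l (fun z => mu z * P z s x) *
      sumK l (fun y => W x y * (hs * (b * V y - a * V x)) *
         (sumK l (fun y' => P y (t - s) y' * Q y') - sumK l (fun y' => P x (t - s) y' * Q y')))).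
Proof.
  set (U := fun x => sumK l (fun y => P x (t - s) y * Q y)).
  set (m := fun x => sumK l (fun z => mu z * P z s x)).
  assert (F1 : forall x, sumK l (fun y => fwd l W (P x (t - s)) y * Q y) = gen l W U x).
  { intro x. rewrite (sumK_ext l _ (fun y => gen l W (fun w => P w (t - s) y) x * Q y)) by (intro; rewrite Hcomm; reflexivity).
    apply (gen_lin l W x (fun w y => P w (t - s) y) Q). }
  assert (F2 : forall x, sumK l (fun y => P x (t - s) y * gen l W Q y) = gen l W U x).
  { intro x. rewrite <- duality. apply F1. }
  assert (A1 : sumK l (fun z => mu z * sumK l (fun x => fwd l W (P z s) x * V x * sumK l (fun y => P x (t - s) y * Q y)
                       - P z s x * V x * sumK l (fun y => fwd l W (P x (t - s)) y * Q y)))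
     = sumK l (fun x => m x * gen l W (fun y => V y * U y) x) - sumK l (fun x => m x * (V x * gen l W U x))).
  { transitivity (sumK l (fun z => mu z * sumK l (fun x => fwd l W (P z s) x * (V x * U x))) -
                  sumK l (fun z => mu z * sumK l (fun x => P z s x * (V x * gen l W U x)))).
    { rewrite <- sumK_minus. apply sumK_ext; intro z. rewrite <- Rmult_minus_distr_l, <- sumK_minus. f_equal.
      apply sumK_ext; intro x. rewrite F1. unfold U. ring. }
    f_equal.
    - rewrite (sumK_ext l (fun z => mu z * sumK l (fun x => fwd l W (P z s) x * (V x * U x)))
                (fun z => mu z * sumK l (fun x => P z s x * gen l W (fun y => V y * U y) x)))
        by (intro z; rewrite duality; reflexivity).
      exact (reassoc l mu (fun z x => P z s x) _).
    - exact (reassoc l mu (fun z x => P z s x) _). }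
  assert (A2 : sumK l (fun z => mu z * sumK l (fun x => P z s x * V x * sumK l (fun y => fwd l W (P x (t - s)) y * Q y)))
     = sumK l (fun x => m x * (V x * gen l W U x))).
  { transitivity (sumK l (fun z => mu z * sumK l (fun x => P z s x * (V x * gen l W U x)))).
    { apply sumK_ext; intro z. f_equal. apply sumK_ext; intro x. rewrite F1. ring. }
    exact (reassoc l mu (fun z x => P z s x) _). }
  assert (A3 : corr l P mu V (gen l W Q) s t = sumK l (fun x => m x * (V x * gen l W U x))).
  { unfold corr. transitivity (sumK l (fun z => mu z * sumK l (fun x => P z s x * (V x * gen l W U x)))).
    { apply sumK_ext; intro z. f_equal. apply sumK_ext; intro x. rewrite F2. ring. }
    exact (reassoc l mu (fun z x => P z s x) _). }
  assert (A4 : corr l P mu (gen l W V) Q s t = sumK l (fun x => m x * (gen l W V x * U x))).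
  { unfold corr. transitivity (sumK l (fun z => mu z * sumK l (fun x => P z s x * (gen l W V x * U x)))).
    { apply sumK_ext; intro z. f_equal. apply sumK_ext; intro x. unfold U. ring. }
    exact (reassoc l mu (fun z x => P z s x) _). }
  rewrite A1, A2, A3, A4.
  assert (E : forall f1 f2 f3 : K -> R, sumK l (fun x => m x * (hs * (b * f1 x - a * f2 x - b * f3 x)))
      = hs * (b * sumK l (fun x => m x * f1 x) - a * sumK l (fun x => m x * f2 x) - b * sumK l (fun x => m x * f3 x))).
  { intros. rewrite (sumK_ext l _ (fun x => (hs * b * (m x * f1 x) - hs * a * (m x * f2 x)) - hs * b * (m x * f3 x))) by (intro; ring).
    rewrite !sumK_minus, <- !sumK_mult_l. ring. }
  transitivity (sumK l (fun x => m x * (hs * (b * gen l W (fun y => V y * U y) x - a * (V x * gen l W U x) - b * (gen l W V x * U x))))).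
  { rewrite E. ring. }
  apply sumK_ext; intro x. f_equal.
  unfold gen.
  rewrite !sumK_mult_l, !sumK_mult_r, !sumK_mult_l, <- !sumK_minus, !sumK_mult_l.
  apply sumK_ext; intro y. unfold U. ring.
Qed.

Lemma split_id {K} (l : list K) (pe p0 : K -> R) (W Wt c : K -> K -> R) (U : K -> R) eps
  (HWt : forall x y, Wt x y - W x y = W x y * (exp (eps * c x y) - 1)) :
  sumK l (fun x => pe x * sumK l (fun y => (Wt x y - W x y) * (U y - U x)))
   - eps * sumK l (fun x => p0 x * sumK l (fun y => W x y * c x y * (U y - U x)))
  = sumK l (fun x => pe x * sumK l (fun y => W x y * (exp (eps * c x y) - 1 - eps * c x y) * (U y - U x)))
   + sumK l (fun x => (pe x - p0 x) * sumK l (fun y => W x y * (eps * c x y) * (U y - U x))).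
Proof.
  rewrite sumK_mult_l, <- sumK_minus, <- sumK_plus. apply sumK_ext; intro x.
  rewrite !sumK_mult_l, <- sumK_minus, <- sumK_plus. apply sumK_ext; intro y.
  rewrite HWt. ring.
Qed.

Definition uu {K} (l : list K) (P : K -> R -> K -> R) T (f : K -> R) r z :=
  sumK l (fun y => P z (T - r) y * f y).
Definition dval {K} (l : list K) (pe : R -> K -> R) (Wt : R -> K -> K -> R) (W : K -> K -> R) P T f r :=
  sumK l (fun x => pe r x * sumK l (fun y => (Wt r x y - W x y) * (uu l P T f r y - uu l P T f r x))).

Theorem proposition1
  (K : Type) (eqdec : forall x y : K, {x = y} + {x <> y})
  (l : list K) (Hnodup : NoDup l) (Hfull : forall x : K, In x l)
  (W : K -> K -> R) (HW : forall x y : K, x <> y -> 0 <= W x y)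
  (mu : K -> R) (Hmu_nonneg : forall x : K, 0 <= mu x) (Hmu_sum : sumK l mu = 1)
  (V Q : K -> R) (a b : R)
  (P : K -> R -> K -> R)
  (HP : forall x : K, kolmogorov_forward l (fun _ => W) (dirac eqdec x) (P x))
  (h : R -> R) (Hh : twice_differentiable_nonneg h)
  (pe : R -> R -> K -> R)
  (Hpe : forall eps : R,
      kolmogorov_forward l (perturbed_rates W V a b (fun s => eps * h s)) mu (pe eps))
  (t : R) (Ht : 0 < t) :
  exists Ds Dt : R -> R,
    (forall s, 0 < s < t ->
       derivable_pt_lim (fun s' => corr l P mu V Q s' t) s (Ds s)) /\
    (forall s, 0 < s < t ->
       derivable_pt_lim (fun t' => corr l P mu V Q s t') t (Dt s)) /\
    exists pr : Riemann_integrable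
        (fun s => h s * (b * Ds s - a * Dt s
                         + b * (corr l P mu V (gen l W Q) s t
                                - corr l P mu (gen l W V) Q s t))) 0 t,
      derivable_pt_lim (fun eps => sumK l (fun x => pe eps t x * Q x)) 0
        (RiemannInt pr).
Proof.
  assert (HPc : forall x y r, continuity_pt (fun r => P x (Rmax 0 r) y) r) by (intros x; apply (kf_sol _ _ _ _ (HP x))).
  assert (HPd : forall x s y, 0 < s -> derivable_pt_lim (fun r => P x r y) s (fwd l W (P x s) y))
    by (intros x; apply (kf_sol _ _ _ _ (HP x))).
  assert (HP0 : forall x y, P x 0 y = dirac eqdec x y) by (intros x; apply (kf_sol _ _ _ _ (HP x))).
  set (Wt := fun eps => perturbed_rates W V a b (fun s => eps * h s)).
  assert (Hpec : forall eps x r, continuity_pt (fun r => pe eps (Rmax 0 r) x) r) by (intros eps; apply (kf_sol _ _ _ _ (Hpe eps))).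
  assert (Hped : forall eps s x, 0 < s -> derivable_pt_lim (fun r => pe eps r x) s (fwd l (Wt eps s) (pe eps s) x))
    by (intros eps; apply (kf_sol _ _ _ _ (Hpe eps))).
  assert (Hpe0 : forall eps x, pe eps 0 x = mu x) by (intros eps; apply (kf_sol _ _ _ _ (Hpe eps))).
  pose proof (comm eqdec l Hnodup Hfull W P HP) as Hcomm.
  pose proof (bwd_eq eqdec l Hnodup Hfull W P HP) as Hbwd.
  pose proof (p0_rep eqdec l Hnodup Hfull W P HP) as Hrep.
  assert (Hrep0 : forall s x, 0 <= s -> pe 0 s x = sumK l (fun z => mu z * P z s x)).
  { apply Hrep. pose proof (Hpe 0) as H. destruct H as [H1 [H2 H3]]. split; [|split]; auto.
    intros s x Hs. eapply deriv_eq. apply H3; auto. apply sumK_ext; intro y.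
    unfold perturbed_rates. rewrite !Rmult_0_l, exp_0. ring. }
  destruct Hh as [h1 [h2 Hh]].
  assert (Hhc : forall s, 0 <= s -> continuity_pt h s) by (intros s Hs; eapply dcont; apply (Hh s Hs)).
  assert (HHb : exists Hb, 0 <= Hb /\ forall s, 0 <= s <= t -> Rabs (h s) <= Hb).
  { assert (Hc : forall c, 0 <= c <= t -> continuity_pt h c) by (intros; apply Hhc; lra).
    destruct (continuity_ab_maj h 0 t ltac:(lra) Hc) as [m1 [Hm1 _]].
    destruct (continuity_ab_min h 0 t ltac:(lra) Hc) as [m2 [Hm2 _]].
    exists (Rabs (h m1) + Rabs (h m2)). split. pose proof (Rabs_pos (h m1)); pose proof (Rabs_pos (h m2)); lra.
    intros s Hs. specialize (Hm1 s Hs). specialize (Hm2 s Hs). split_Rabs; lra. }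
  destruct HHb as [Hb [HHb0 HHb]].
  destruct (mat_bound l Hfull W) as [Wc [HWc0 HWc]].
  destruct (mat_bound l Hfull (fun x y => b * V y - a * V x)) as [Cc [HCc0 HCc]].
  set (Z := Hb * Cc).
  assert (HZ0 : 0 <= Z) by (apply Rmult_le_pos; auto).
  assert (HZ : forall s x y, 0 <= s <= t -> Rabs (h s * (b * V y - a * V x)) <= Z).
  { intros. rewrite Rabs_mult. apply Rmult_le_compat; auto using Rabs_pos. }
  set (n := INR (length l)).
  assert (Hn : 0 <= n) by apply pos_INR.
  set (MP := 1 + 1 * exp (4 * Wc * n * t)).
  assert (HMP : forall x r y, 0 <= r <= t -> Rabs (P x r y) <= MP).
  { intros x r y Hr. unfold MP.
    replace 1 with (sumK l (fun y => P x 0 y * P x 0 y)) at 2.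
    apply (sol_comp_bound l Hfull (P x) (fun _ => W) Wc t); auto.
    rewrite (sumK_ext l _ (fun y => (if eqdec x y then 1 else 0) * (fun y => if eqdec x y then 1 else 0) y)) by (intro; rewrite HP0; reflexivity).
    rewrite sumK_dirac by auto. destruct (eqdec x x); congruence. }
  assert (HMP0 : 0 <= MP) by (unfold MP; pose proof (exp_pos (4 * Wc * n * t)); lra).
  set (Cpe := Wc * exp Z).
  set (Mpe := 1 + sumK l (fun x => mu x * mu x) * exp (4 * Cpe * n * t)).
  assert (HMpe : forall eps, Rabs eps <= 1 -> forall s x, 0 <= s <= t -> Rabs (pe eps s x) <= Mpe).
  { intros eps Heps s x Hs. unfold Mpe.
    rewrite <- (sumK_ext l (fun x => pe eps 0 x * pe eps 0 x)) by (intro; rewrite Hpe0; reflexivity).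
    apply (sol_comp_bound l Hfull (pe eps) (Wt eps) Cpe t); auto.
    - unfold Cpe. pose proof (exp_pos Z); apply Rmult_le_pos; lra.
    - intros s' x' y' Hs'. unfold Wt, perturbed_rates, Cpe. rewrite Rabs_mult.
      rewrite (Rabs_right (exp _)) by (left; apply exp_pos).
      apply Rmult_le_compat; auto using Rabs_pos. left; apply exp_pos.
      apply exp_mono. rewrite Rmult_assoc.
      pose proof (HZ s' x' y' ltac:(lra)).
      eapply Rle_trans; [apply Rle_abs|]. rewrite Rabs_mult.
      pose proof (Rabs_pos (h s' * (b * V y' - a * V x'))).
      pose proof (Rabs_pos eps). nra. }
  assert (HMpe0 : 0 <= Mpe).
  { unfold Mpe. pose proof (exp_pos (4 * Cpe * n * t)).
    pose proof (sumK_nonneg l (fun x => mu x * mu x) (fun x => Rle_0_sqr _)). nra. }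
  (* Duhamel derivative *)
  assert (Hdu : forall eps T (f : K -> R) r, 0 < r < T ->
    derivable_pt_lim (fun r => sumK l (fun x => pe eps r x * uu l P T f r x)) r
      (dval l (pe eps) (Wt eps) W P T f r)).
  { intros eps T f r Hr. eapply deriv_eq.
    - apply deriv_sumK; intro x. apply dmult. apply Hped; lra.
      unfold uu. apply (dcomp (fun rho => sumK l (fun y => P x rho y * f y)) (fun r => T - r)).
      apply dminus; [apply dconst | apply did]. apply Hbwd; lra.
    - cbv beta. rewrite sumK_plus.
      rewrite (duality l (Wt eps r) (pe eps r) (fun x => uu l P T f r x)).
      rewrite <- sumK_plus. unfold dval. apply sumK_ext; intro x.
      unfold gen, uu.
      match goal with |- ?p * ?A + ?p * (?B * (0 - 1)) = _ => replace (p * A + p * (B * (0 - 1))) with (p * (A - B)) by ring end.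
      f_equal. rewrite <- sumK_minus. apply sumK_ext; intro; ring. }
  assert (Hmvi : forall eps T (f : K -> R) (G G' : R -> R) Kb, 0 < T ->
    (forall r, 0 < r < T -> derivable_pt_lim G r (G' r)) -> continuity_pt G 0 -> continuity_pt G T ->
    (forall r, 0 < r < T -> Rabs (dval l (pe eps) (Wt eps) W P T f r - eps * G' r) <= Kb) ->
    Rabs ((sumK l (fun x => pe eps T x * f x) - eps * G T) -
          (sumK l (fun x => mu x * sumK l (fun y => P x T y * f y)) - eps * G 0)) <= Kb * T).
  { intros eps T f G G' Kb HT HGd HG0 HGT HK.
    assert (E1 : sumK l (fun x => pe eps T x * f x) = sumK l (fun x => pe eps T x * uu l P T f T x)).
    { apply sumK_ext; intro x. unfold uu. replace (T - T) with 0 by ring. f_equal.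
      rewrite (sumK_ext l _ (fun y => (if eqdec x y then 1 else 0) * f y)) by (intro; rewrite HP0; reflexivity).
      rewrite sumK_dirac; auto. }
    assert (E2 : sumK l (fun x => mu x * sumK l (fun y => P x T y * f y)) = sumK l (fun x => pe eps 0 x * uu l P T f 0 x)).
    { apply sumK_ext; intro x. unfold uu. rewrite Hpe0. replace (T - 0) with T by ring. reflexivity. }
    rewrite E1, E2. replace (Kb * T) with (Kb * (T - 0)) by ring.
    apply (mvi (fun r => sumK l (fun x => pe eps r x * uu l P T f r x) - eps * G r)
               (fun r => dval l (pe eps) (Wt eps) W P T f r - eps * G' r)
               (fun r => sumK l (fun x => pe eps (Rmax 0 r) x * sumK l (fun y => P x (Rmax 0 (T - r)) y * f y)) - eps * G r)); auto.
    - intros r Hr. apply dminus. apply Hdu; auto. apply (derivable_pt_lim_scal G). auto.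
    - apply cminus. cont_tac. apply Hpec. apply (ccomp (fun r => P _ (Rmax 0 r) _) (fun r => T - r)).
      apply cminus; [apply cconst|apply cid]. apply HPc. apply (continuity_pt_scal G); auto.
    - apply cminus. cont_tac. apply Hpec. apply (ccomp (fun r => P _ (Rmax 0 r) _) (fun r => T - r)).
      apply cminus; [apply cconst|apply cid]. apply HPc. apply (continuity_pt_scal G); auto.
    - intros r Hr. unfold uu. rewrite (Rmax_right 0 r) by lra. rewrite (Rmax_right 0 (T - r)) by lra. reflexivity. }
  assert (Hzero : forall T f, 0 < T -> sumK l (fun x => pe 0 T x * f x) = sumK l (fun x => mu x * sumK l (fun y => P x T y * f y))).
  { intros T f HT. pose proof (Hmvi 0 T f (fun _ => 0) (fun _ => 0) 0 HT) as H.
    assert (Habs : forall z, Rabs z <= 0 * T -> z = 0) by (intros z Hz; rewrite Rmult_0_l in Hz; split_Rabs; lra).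
    apply Rminus_diag_uniq.
    match type of H with _ -> _ -> _ -> ?A -> Rabs ?e <= _ => assert (e = 0) end.
    { apply Habs. apply H; try (intros; apply dconst); try apply cconst.
      intros r Hr. unfold dval. rewrite (sumK_ext l _ (fun _ => 0)).
      rewrite sumK_zero, Rmult_0_l, Rminus_0_r, Rabs_R0; lra.
      intro x. rewrite (sumK_ext l _ (fun _ => 0)). rewrite sumK_zero; ring.
      intro y. unfold Wt, perturbed_rates. rewrite !Rmult_0_l, exp_0. ring. }
    lra. }
  set (d0 := / (1 + Z)).
  assert (Hd0 : 0 < d0) by (unfold d0; apply Rinv_0_lt_compat; lra).
  assert (Hd01 : d0 <= 1).
  { unfold d0. rewrite <- Rinv_1. apply Rinv_le_contravar; lra. }
  assert (Hd0Z : forall eps, Rabs eps <= d0 -> Rabs eps * Z <= 1).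
  { intros eps He. unfold d0 in He. assert (Rabs eps * (1 + Z) <= 1).
    { apply Rmult_le_reg_r with (/ (1 + Z)). apply Rinv_0_lt_compat; lra.
      rewrite Rmult_assoc, Rinv_r, Rmult_1_l, Rmult_1_r by lra. auto. }
    pose proof (Rabs_pos eps). nra. }
  assert (Huu : forall T f Mf r z, 0 <= T - r <= t -> (forall y, Rabs (f y) <= Mf) -> 0 <= Mf ->
     Rabs (uu l P T f r z) <= n * (MP * Mf)).
  { intros T f Mf r z Hr Hf HMf. unfold uu. apply sumK_bound. intro y. rewrite Rabs_mult.
    apply Rmult_le_compat; auto using Rabs_pos. }
  assert (HWt : forall eps r x y, Wt eps r x y - W x y = W x y * (exp (eps * (h r * (b * V y - a * V x))) - 1)).
  { intros. unfold Wt, perturbed_rates. rewrite Rmult_assoc. ring. }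
  assert (Hdvb : forall eps T f Mf r, Rabs eps <= d0 -> 0 < r < T -> T <= t -> (forall y, Rabs (f y) <= Mf) -> 0 <= Mf ->
     Rabs (dval l (pe eps) (Wt eps) W P T f r) <= n * (Mpe * (n * (Wc * (3 * (Rabs eps * Z)) * (2 * (n * (MP * Mf))))))).
  { intros eps T f Mf r He Hr HT Hf HMf. unfold dval. apply sum2_bound; auto.
    - intro x. apply HMpe; lra.
    - intros x y. rewrite HWt. apply abs3; auto.
      + apply Rle_trans with (3 * Rabs (eps * (h r * (b * V y - a * V x)))).
        * apply exp_le1. rewrite Rabs_mult. pose proof (HZ r x y ltac:(lra)). pose proof (Hd0Z eps He).
          pose proof (Rabs_pos eps). nra.
        * rewrite Rabs_mult. pose proof (HZ r x y ltac:(lra)). pose proof (Rabs_pos eps). nra.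
      + unfold Rminus at 1. eapply Rle_trans; [apply Rabs_triang|]. rewrite Rabs_Ropp.
        pose proof (Huu T f Mf r y ltac:(lra) Hf HMf). pose proof (Huu T f Mf r x ltac:(lra) Hf HMf). lra. }
  set (Kd := n * (Mpe * (n * (Wc * (3 * Z) * (2 * (n * (MP * 1))))))).
  assert (HKd : 0 <= Kd).
  { unfold Kd. repeat (apply Rmult_le_pos; try lra; auto). }
  assert (Hdiff : forall eps, Rabs eps <= d0 -> forall s x, 0 <= s <= t -> Rabs (pe eps s x - pe 0 s x) <= Kd * t * Rabs eps).
  { intros eps He s x Hs. destruct (Req_dec s 0) as [->|Hs0].
    { rewrite !Hpe0. unfold Rminus; rewrite Rplus_opp_r, Rabs_R0. pose proof (Rabs_pos eps).
      apply Rmult_le_pos; auto. apply Rmult_le_pos; lra. }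
    set (f := fun y => if eqdec y x then 1 else 0).
    assert (Hf : forall y, Rabs (f y) <= 1).
    { intro y; unfold f; destruct (eqdec y x); rewrite ?Rabs_R1, ?Rabs_R0; lra. }
    pose proof (Hmvi eps s f (fun _ => 0) (fun _ => 0) (Rabs eps * Kd) ltac:(lra)) as H.
    assert (Ee : sumK l (fun y => pe eps s y * f y) = pe eps s x) by (apply (sumK_dirac' eqdec l x (pe eps s)); auto).
    assert (E0 : sumK l (fun y => pe 0 s y * f y) = pe 0 s x) by (apply (sumK_dirac' eqdec l x (pe 0 s)); auto).
    rewrite Ee in H. rewrite <- (Hzero s f), E0 in H by lra.
    assert (H' : Rabs (pe eps s x - eps * 0 - (pe 0 s x - eps * 0)) <= Rabs eps * Kd * s).
    { apply H; try (intros; apply dconst); try apply cconst.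
      intros r Hr. rewrite Rmult_0_r, Rminus_0_r.
      eapply Rle_trans. apply (Hdvb eps s f 1 r He Hr ltac:(lra) Hf ltac:(lra)).
      right. unfold Kd. ring. }
    replace (pe eps s x - eps * 0 - (pe 0 s x - eps * 0)) with (pe eps s x - pe 0 s x) in H' by ring.
    eapply Rle_trans; [apply H'|]. pose proof (Rabs_pos eps).
    replace (Kd * t * Rabs eps) with (Rabs eps * Kd * t) by ring.
    apply Rmult_le_compat_l; [apply Rmult_le_pos|]; lra. }
  set (Gm := fun r => sumK l (fun x => pe 0 r x * sumK l (fun y => W x y * (h r * (b * V y - a * V x)) *
                  (uu l P t Q r y - uu l P t Q r x)))).
  destruct (mat_bound l Hfull (fun _ y => Q y)) as [MQ [HMQ0 HMQ]].
  set (Mu := n * (MP * MQ)).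
  assert (HMu0 : 0 <= Mu) by (unfold Mu; repeat apply Rmult_le_pos; auto).
  set (K2 := n * (Mpe * (n * (Wc * (3 * (Z * Z)) * (2 * Mu)))) + n * (Kd * t * (n * (Wc * Z * (2 * Mu))))).
  assert (Hmain : forall eps, Rabs eps <= d0 -> forall r, 0 < r < t ->
     Rabs (dval l (pe eps) (Wt eps) W P t Q r - eps * Gm r) <= K2 * (Rabs eps * Rabs eps)).
  { intros eps He r Hr. unfold dval, Gm.
    pose proof (split_id l (pe eps r) (pe 0 r) W (Wt eps r) (fun x y => h r * (b * V y - a * V x))
                  (uu l P t Q r) eps (HWt eps r)) as SI.
    cbv beta in SI. rewrite SI. clear SI.
    assert (HD : forall x y, Rabs (uu l P t Q r y - uu l P t Q r x) <= 2 * Mu).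
    { intros x y. unfold Rminus at 1. eapply Rle_trans; [apply Rabs_triang|]. rewrite Rabs_Ropp.
      pose proof (Huu t Q MQ r y ltac:(lra) (HMQ y) HMQ0). pose proof (Huu t Q MQ r x ltac:(lra) (HMQ x) HMQ0).
      unfold Mu; lra. }
    assert (Hz : forall x y, Rabs (eps * (h r * (b * V y - a * V x))) <= Rabs eps * Z).
    { intros x y. rewrite Rabs_mult. apply Rmult_le_compat_l. apply Rabs_pos. apply HZ; lra. }
    pose proof (Rabs_pos eps) as Hea. pose proof (Hd0Z eps He) as HeZ.
    eapply Rle_trans; [apply Rabs_triang|].
    eapply Rle_trans; [apply Rplus_le_compat|].
    - apply (sum2_bound l _ _ Mpe (Wc * (3 * (Rabs eps * Z * (Rabs eps * Z))) * (2 * Mu))); auto.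
      + intro x. apply HMpe; lra.
      + intros x y. apply abs3; auto.
        eapply Rle_trans. apply exp_le2. eapply Rle_trans; [apply Hz|]; auto.
        apply Rmult_le_compat_l; [lra|]. pose proof (Hz x y).
        pose proof (Rabs_pos (eps * (h r * (b * V y - a * V x)))).
        replace (eps * (h r * (b * V y - a * V x)) * (eps * (h r * (b * V y - a * V x)))) with
          (Rabs (eps * (h r * (b * V y - a * V x))) * Rabs (eps * (h r * (b * V y - a * V x)))) by (split_Rabs; ring).
        apply Rmult_le_compat; auto.
    - apply (sum2_bound l _ _ (Kd * t * Rabs eps) (Wc * (Rabs eps * Z) * (2 * Mu))); auto.
      + repeat apply Rmult_le_pos; lra.
      + intro x. apply Hdiff; auto; lra.
      + intros x y. apply abs3; auto.
    - right. unfold K2, n. ring. }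
  assert (HPdm : forall x y T s, 0 < T - s -> derivable_pt_lim (fun s' => P x (T - s') y) s (fwd l W (P x (T - s)) y * (0 - 1))).
  { intros. apply (dcomp (fun r => P x r y) (fun s' => T - s')). apply dminus; [apply dconst|apply did]. apply HPd; auto. }
  assert (HPdp : forall x y T s, 0 < s - T -> derivable_pt_lim (fun s' => P x (s' - T) y) s (fwd l W (P x (s - T)) y * (1 - 0))).
  { intros. apply (dcomp (fun r => P x r y) (fun s' => s' - T)). apply dminus; [apply did|apply dconst]. apply HPd; auto. }
  assert (HPc2 : forall x y T r, continuity_pt (fun s => P x (Rmax 0 (T - s)) y) r).
  { intros. apply (ccomp (fun r => P x (Rmax 0 r) y) (fun s => T - s)). apply cminus; [apply cconst|apply cid]. apply HPc. }
  pose (Ds := fun s => sumK l (fun z => mu z * sumK l (fun x => fwd l W (P z (Rmax 0 s)) x * V x * sumK l (fun y => P x (Rmax 0 (t - s)) y * Q y)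
                       - P z (Rmax 0 s) x * V x * sumK l (fun y => fwd l W (P x (Rmax 0 (t - s))) y * Q y)))).
  pose (Dt := fun s => sumK l (fun z => mu z * sumK l (fun x => P z (Rmax 0 s) x * V x * sumK l (fun y => fwd l W (P x (Rmax 0 (t - s))) y * Q y)))).
  exists Ds, Dt. split; [|split].
  { intros s Hs. unfold corr. eapply deriv_eq.
    - dtac; first [apply HPd; lra | apply HPdm; lra].
    - cbv beta. unfold Ds. rewrite (Rmax_right 0 s), (Rmax_right 0 (t - s)) by lra.
      apply sumK_ext; intro z. rewrite Rmult_0_l, Rplus_0_l. f_equal. apply sumK_ext; intro x.
      rewrite (sumK_ext l (fun y => fwd l W (P x (t - s)) y * (0 - 1) * Q y + P x (t - s) y * 0)
                 (fun y => - (fwd l W (P x (t - s)) y * Q y))) by (intro; ring).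
      rewrite sumK_opp. ring. }
  { intros s Hs. unfold corr. eapply deriv_eq.
    - dtac; first [apply HPdp; lra].
    - cbv beta. unfold Dt. rewrite (Rmax_right 0 s), (Rmax_right 0 (t - s)) by lra.
      apply sumK_ext; intro z. rewrite Rmult_0_l, Rplus_0_l. f_equal. apply sumK_ext; intro x.
      rewrite (sumK_ext l (fun y => fwd l W (P x (t - s)) y * (1 - 0) * Q y + P x (t - s) y * 0)
                 (fun y => fwd l W (P x (t - s)) y * Q y)) by (intro; ring).
      ring. }
  pose (Pc := fun x r y => P x (Rmax 0 r) y).
  pose (Gc := fun s => h s * (b * Ds s - a * Dt s + b * (corr l Pc mu V (gen l W Q) s t - corr l Pc mu (gen l W V) Q s t))).
  assert (Ecorr : forall F G s, 0 <= s <= t -> corr l Pc mu F G s t = corr l P mu F G s t).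
  { intros F G s Hs. unfold corr, Pc. rewrite (Rmax_right 0 s), (Rmax_right 0 (t - s)) by lra. reflexivity. }
  assert (C0 : forall x, 0 <= x <= t -> continuity_pt Gc x).
  { intros x Hx. unfold Gc, Ds, Dt, corr, Pc, fwd. apply cmult; [apply Hhc; lra|].
    cont_tac; first [apply HPc | apply HPc2]. }
  assert (EGm : forall s, 0 < s < t -> Gc s = Gm s).
  { intros s Hs. unfold Gc. rewrite !Ecorr by lra. unfold Ds, Dt.
    rewrite (Rmax_right 0 s), (Rmax_right 0 (t - s)) by lra.
    rewrite (alg_identity l W mu P V Q s t (h s) a b (fun x y => Hcomm x y (t - s) ltac:(lra))).
    unfold Gm, uu. apply sumK_ext; intro x. rewrite Hrep0 by lra. reflexivity. }
  assert (Htle : 0 <= t) by lra.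
  pose proof (continuity_implies_RiemannInt Htle C0) as prGc.
  assert (pr : Riemann_integrable
        (fun s => h s * (b * Ds s - a * Dt s
                         + b * (corr l P mu V (gen l W Q) s t
                                - corr l P mu (gen l W V) Q s t))) 0 t).
  { refine (@Riemann_integrable_ext Gc _ 0 t _ prGc). intros x Hx.
    rewrite Rmin_left, Rmax_right in Hx by lra. unfold Gc. rewrite !Ecorr by lra. reflexivity. }
  exists pr.
  set (Gam := primitive Htle (FTC_P1 Htle C0)).
  assert (Hl : RiemannInt pr = Gam t - Gam 0).
  { rewrite (RiemannInt_P18 pr prGc Htle). apply (RiemannInt_P20 Htle (FTC_P1 Htle C0) prGc).
    intros x Hx. unfold Gc. rewrite !Ecorr by lra. reflexivity. }
  assert (HGd : forall x, 0 <= x <= t -> derivable_pt_lim Gam x (Gc x)).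
  { intros x Hx. apply RiemannInt_P28; auto. }
  assert (HK2 : 0 <= K2).
  { unfold K2. pose proof (exp_pos Z). repeat first [apply Rplus_le_le_0_compat | apply Rmult_le_pos]; try lra; try (apply sumK_nonneg; intro; apply Rle_0_sqr). all: left; apply exp_pos. }
  assert (Hfin : forall eps, Rabs eps <= d0 ->
     Rabs (sumK l (fun x => pe eps t x * Q x) - sumK l (fun x => pe 0 t x * Q x) - eps * RiemannInt pr)
       <= K2 * (Rabs eps * Rabs eps) * t).
  { intros eps He. rewrite Hl, (Hzero t Q Ht).
    replace (sumK l (fun x => pe eps t x * Q x) - sumK l (fun x => mu x * sumK l (fun y => P x t y * Q y)) - eps * (Gam t - Gam 0))
      with ((sumK l (fun x => pe eps t x * Q x) - eps * Gam t) - (sumK l (fun x => mu x * sumK l (fun y => P x t y * Q y)) - eps * Gam 0)) by ring.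
    apply (Hmvi eps t Q Gam Gc); auto.
    - intros r Hr; apply HGd; lra.
    - eapply dcont; apply HGd; lra.
    - eapply dcont; apply HGd; lra.
    - intros r Hr. rewrite EGm by auto. apply Hmain; auto. }
  intros eta Heta.
  assert (Hpos : 0 < Rmin d0 (eta / (K2 * t + 1))).
  { apply Rmin_pos; auto. apply Rdiv_lt_0_compat; auto. pose proof (Rmult_le_pos K2 t HK2 ltac:(lra)). lra. }
  exists (mkposreal _ Hpos). intros e He0 Hel. simpl in Hel.
  pose proof (Rmin_l d0 (eta / (K2 * t + 1))). pose proof (Rmin_r d0 (eta / (K2 * t + 1))).
  rewrite Rplus_0_l.
  pose proof (Hfin e ltac:(lra)) as HF.
  set (D := sumK l (fun x => pe e t x * Q x) - sumK l (fun x => pe 0 t x * Q x) - e * RiemannInt pr) in HF.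
  replace ((sumK l (fun x => pe e t x * Q x) - sumK l (fun x => pe 0 t x * Q x)) / e - RiemannInt pr) with (D / e)
    by (unfold D; field; auto).
  unfold Rdiv. rewrite Rabs_mult, Rabs_inv.
  assert (Hea : 0 < Rabs e) by (apply Rabs_pos_lt; auto).
  apply Rle_lt_trans with (K2 * Rabs e * t).
  { apply Rmult_le_reg_r with (Rabs e); auto. rewrite Rmult_assoc, Rinv_l, Rmult_1_r by lra.
    replace (K2 * Rabs e * t * Rabs e) with (K2 * (Rabs e * Rabs e) * t) by ring. auto. }
  assert (Rabs e * (K2 * t + 1) < eta).
  { assert (0 < K2 * t + 1) by (pose proof (Rmult_le_pos K2 t HK2 ltac:(lra)); lra).
    apply Rmult_lt_reg_r with (/ (K2 * t + 1)). apply Rinv_0_lt_compat; auto.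
    rewrite Rmult_assoc, Rinv_r, Rmult_1_r by lra. unfold Rdiv in H0. lra. }
  pose proof (Rmult_le_pos K2 t HK2 ltac:(lra)). nra.
Qed.
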